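(* Let $H$ be a $d\times d$ Hermitian matrix with eigendecomposition $H=U\,\mathrm{diag}(\mathbf{q})\,U^\dagger$, where $U$ is unitary and $\mathbf{q}\in\mathbb{R}^d$ lists the eigenvalues. Let $t\ge 1/d$. Then $$\max_{\rho\in S^t}\mathrm{Tr}(\rho H)=\max_{\mathbf{p}\in P(t)}\mathbf{p}\cdot\mathbf{q},$$ and if $\mathbf{p}^*$ is a maximizer of the right-hand side, then $\rho^*=U\,\mathrm{diag}(\mathbf{p}^* )\,U^\dagger$ is a maximizer of the left-hand side.
   Context: $S^t=\{\rho\in\mathcal{L}(\mathbb{C}^d):\rho\succeq 0,\ \mathrm{Tr}(\rho)=1,\ \mathrm{Tr}(\rho^2)\le t\}$ is the set of density operators of purity at most $t$. $P(t)=\{\mathbf{p}\in\mathbb{R}^d:\mathbf{p}\ge 0,\ \sum_i\mathbf{p}_i=1,\ \mathbf{p}\cdot\mathbf{p}\le t\}$. $\mathrm{diag}(\mathbf{a})$ is the diagonal matrix with diagonal $\mathbf{a}$. *)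

(* Defs.v *)
From HB Require Import structures.
From mathcomp Require Import all_boot all_order all_algebra.
From mathcomp Require Import sesquilinear spectral.
Set Implicit Arguments. Unset Strict Implicit. Unset Printing Implicit Defensive.
Import Order.TTheory GRing.Theory Num.Theory.
Local Open Scope ring_scope.
Local Open Scope sesquilinear_scope.

(* Complex scalars: any numeric closed field C (e.g. algC, or R[i]). *)
Section Defs.
Variables (C : numClosedFieldType) (d : nat).

Definition hermitian_mx (H : 'M[C]_d) : Prop := H ^t* = H.

Definition psd (rho : 'M[C]_d) : Prop :=
  hermitian_mx rho /\ forall v : 'rV[C]_d, 0 <= (v *m rho *m v ^t*) 0 0.

Definition St (t : C) (rho : 'M[C]_d) : Prop :=
  psd rho /\ \tr rho = 1 /\ \tr (rho *m rho) <= t.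

(* dot product of vectors in R^d (stored as real row vectors over C) *)
Definition dotv (p q : 'rV[C]_d) : C := \sum_(i < d) p 0 i * q 0 i.

Definition Pt (t : C) (p : 'rV[C]_d) : Prop :=
  p \is a realmx /\ (forall i, 0 <= p 0 i) /\ \sum_(i < d) p 0 i = 1
  /\ dotv p p <= t.

Definition Pt_maximizer (t : C) (q p : 'rV[C]_d) : Prop :=
  Pt t p /\ forall p' : 'rV[C]_d, Pt t p' -> dotv p' q <= dotv p q.

Definition St_maximizer (t : C) (H rho : 'M[C]_d) : Prop :=
  St t rho /\ forall r : 'M[C]_d, St t r -> \tr (r *m H) <= \tr (rho *m H).
End Defs.

(* Main.v *)
Require Import Defs.
From HB Require Import structures.
From mathcomp Require Import all_boot all_order all_algebra.
From mathcomp Require Import sesquilinear spectral.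
From mathcomp Require Import ring lra.
Import Order.TTheory GRing.Theory Num.Theory.
Local Open Scope ring_scope.
Local Open Scope sesquilinear_scope.

Module Aux.
Set Implicit Arguments. Unset Strict Implicit. Unset Printing Implicit Defensive.

Section RealSub.
Variable C : numClosedFieldType.
Definition RC := {x : C | x \is Num.real}.
HB.instance Definition _ := [isSub for (@sval C (fun x => x \is Num.real)) : RC -> C].
HB.instance Definition _ := [Choice of RC by <:].
HB.instance Definition _ := [SubChoice_isSubZmodule of RC by <:].
HB.instance Definition _ := [SubZmodule_isSubNzRing of RC by <:].
HB.instance Definition _ := [SubNzRing_isSubComNzRing of RC by <:].
HB.instance Definition _ := [SubNzRing_isSubUnitRing of RC by <:].
HB.instance Definition _ := [SubComUnitRing_isSubIntegralDomain of RC by <:].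
HB.instance Definition _ := [SubIntegralDomain_isSubField of RC by <:].

Definition RC_le (x y : RC) := (val x <= val y).
Definition RC_lt (x y : RC) := (val x < val y).
Definition RC_norm (x : RC) : RC := Sub `|val x| (normr_real (val x)).

Fact RC_le0_add x y : RC_le 0 x -> RC_le 0 y -> RC_le 0 (x + y).
Proof. rewrite /RC_le /= ; exact: addr_ge0. Qed.
Fact RC_le0_mul x y : RC_le 0 x -> RC_le 0 y -> RC_le 0 (x * y).
Proof. rewrite /RC_le /= ; exact: mulr_ge0. Qed.
Fact RC_le0_anti x : RC_le 0 x -> RC_le x 0 -> x = 0.
Proof. rewrite /RC_le /= => h1 h2; apply: val_inj; apply/eqP; by rewrite eq_le h1 h2. Qed.
Fact RC_sub_ge0 x y : RC_le 0 (y - x) = RC_le x y.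
Proof. by rewrite /RC_le /= subr_ge0. Qed.
Fact RC_le0_total x : RC_le 0 x || RC_le x 0.
Proof. rewrite /RC_le /=; have := valP x; by rewrite realE. Qed.
Fact RC_normN x : RC_norm (- x) = RC_norm x.
Proof. apply: val_inj; by rewrite /= normrN. Qed.
Fact RC_ge0_norm x : RC_le 0 x -> RC_norm x = x.
Proof. rewrite /RC_le => h; apply: val_inj; by rewrite /= ger0_norm. Qed.
Fact RC_lt_def x y : RC_lt x y = (y != x) && RC_le x y.
Proof. by rewrite /RC_lt /RC_le lt_def. Qed.

HB.instance Definition _ := Num.IntegralDomain_isLeReal.Build RC
  RC_le0_add RC_le0_mul RC_le0_anti RC_sub_ge0 RC_le0_total RC_normN RC_ge0_norm RC_lt_def.

End RealSub.

Section Gen.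
Variable R : realFieldType.

Lemma exmax (I : finType) (P : pred I) (F : I -> R) i0 : P i0 ->
  exists2 i, P i & forall j, P j -> F j <= F i.
Proof. move=> Pi0; case: (arg_maxP F Pi0) => i Pi H; exists i => // j Pj; exact: H. Qed.

Lemma exmin (I : finType) (P : pred I) (F : I -> R) i0 : P i0 ->
  exists2 i, P i & forall j, P j -> F i <= F j.
Proof. move=> Pi0; case: (arg_minP F Pi0) => i Pi H; exists i => // j Pj; exact: H. Qed.

Variables (d : nat) (q : 'I_d -> R) (t : R).

Definition pos (x : R) := Num.max 0 x.
Lemma pos_ge0 x : 0 <= pos x. Proof. by rewrite /pos le_max lexx. Qed.
Lemma pos_ge x : x <= pos x. Proof. by rewrite /pos le_max lexx orbT. Qed.
Lemma posE x : pos x = if 0 <= x then x else 0.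
Proof. by rewrite /pos maxEle. Qed.
Lemma pos_mul x (h : x = pos x) : x * pos x = x ^+ 2. Proof. by rewrite -h expr2. Qed.

Definition feasible (p : 'I_d -> R) :=
  (forall i, 0 <= p i) /\ \sum_i p i = 1 /\ \sum_i p i ^+ 2 <= t.
Definition optimal p :=
  feasible p /\ forall p', feasible p' -> \sum_i p' i * q i <= \sum_i p i * q i.

Lemma cert_kkt (a b : R) : 0 < a ->
  \sum_i pos (a * q i - b) = 1 -> \sum_i pos (a * q i - b) ^+ 2 = t ->
  optimal (fun i => pos (a * q i - b)).
Proof.
move=> a0 s1 s2; split; first by split; [move=> i; apply: pos_ge0| split; rewrite ?s2].

move=> p' [p'0 [p'1 p'2]].
set p := fun i => pos (a * q i - b).
have h1 : a * \sum_i p' i * q i - b <= \sum_i p' i * p i.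
  rewrite mulr_sumr -[b]mulr1 -p'1 mulr_sumr -sumrB; apply: ler_sum => i _.
  have := pos_ge (a * q i - b); have := p'0 i; rewrite /p. move=> H1 H2. nra.
have h2 : a * \sum_i p i * q i - b = t.
  rewrite mulr_sumr -[b]mulr1 -s1 mulr_sumr -sumrB -s2; apply: eq_bigr => i _.
  rewrite /p posE; case: ifP => h; first by ring.
  by rewrite !(mul0r, mulr0) subr0 expr0n.
have h3 : 2 * \sum_i p' i * p i <= \sum_i p' i ^+ 2 + \sum_i p i ^+ 2.
  rewrite mulr_sumr -big_split /=; apply: ler_sum => i _.
  have := sqr_ge0 (p' i - p i); nra.
rewrite /p in h1 h2 h3 *. rewrite s2 in h3.
have : a * (\sum_i p' i * q i - \sum_i pos (a * q i - b) * q i) <= 0 by nra.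
rewrite pmulr_rle0 // subr_le0 //.
Qed.


Lemma sum_if (P : pred 'I_d) (c : R) :
  \sum_i (if P i then c else 0) = #|P|%:R * c.
Proof. by rewrite -big_mkcond /= sumr_const mulr_natl. Qed.

Lemma cert_argmax (iM : 'I_d) :
  (forall j, q j <= q iM) ->
  (#|[pred i | q i == q iM]|%:R)^-1 <= t ->
  optimal (fun i => if q i == q iM then (#|[pred i | q i == q iM]|%:R)^-1 else 0).
Proof.
set M := q iM; set m := #|[pred i | q i == M]|.
move=> hM ht.
have m0 : (0 < m)%N by apply/card_gt0P; exists iM; rewrite inE /M eqxx.
have m0' : (0 : R) < m%:R by rewrite ltr0n.
have hs : \sum_i (if q i == M then (m%:R^-1 : R) else 0) = 1.
  by rewrite (sum_if [pred i | q i == M]) divff // gt_eqF.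
have hv : \sum_i (if q i == M then m%:R^-1 else 0) * q i = M.
  rewrite (eq_bigr (fun i => if q i == M then m%:R^-1 * M else 0)); last first.
    by move=> i _; case: eqP => [->|]; rewrite ?mul0r.
  by rewrite (sum_if [pred i | q i == M]) mulrA divff ?mul1r // gt_eqF.
split.
  split; first by move=> i; case: ifP => _ //; rewrite invr_ge0 ltW.
  split => //.
  rewrite (eq_bigr (fun i => if q i == M then m%:R^-1 ^+ 2 else 0)); last first.
    by move=> i _; case: ifP => _ //; rewrite expr0n.
  rewrite (sum_if [pred i | q i == M]) -/m expr2 mulrA divff ?mul1r // gt_eqF //.
move=> p' [p'0 [p'1 _]]; rewrite hv.
apply: le_trans (_ : \sum_i p' i * M <= _).
  by apply: ler_sum => i _; apply: ler_wpM2l.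
by rewrite -mulr_suml p'1 mul1r.
Qed.

Lemma cert_uniform : (0 < d)%N -> t = d%:R^-1 -> optimal (fun _ => d%:R^-1).
Proof.
move=> d0 ht.
have d0' : (0 : R) < d%:R by rewrite ltr0n.
have hs : \sum_(i < d) (d%:R^-1 : R) = 1.
  by rewrite sumr_const card_ord -(mulr_natl (d%:R^-1 : R) d) mulfV // gt_eqF.
split.
  split; first by move=> i; rewrite invr_ge0 ltW.
  split => //.
  by rewrite sumr_const card_ord -(mulr_natl (d%:R^-1 ^+ 2 : R) d) ht expr2 mulrA mulfV ?mul1r // gt_eqF.
move=> p' [p'0 [p'1 p'2]].
have h : \sum_i (p' i - d%:R^-1) ^+ 2 = \sum_i p' i ^+ 2 - d%:R^-1.
  rewrite (eq_bigr (fun i => p' i ^+ 2 - 2 * d%:R^-1 * p' i + d%:R^-1 ^+ 2)); last first.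
    by move=> i _; ring.
  rewrite big_split /= sumrB -mulr_sumr p'1 sumr_const card_ord -(mulr_natl (d%:R^-1 ^+ 2 : R) d).
  rewrite expr2 mulrA mulfV ?mul1r ?gt_eqF //; ring.
have : \sum_i (p' i - d%:R^-1) ^+ 2 == 0.
  by rewrite eq_le sumr_ge0 ?andbT // => [|i _]; [rewrite h subr_le0 -ht | rewrite sqr_ge0].
rewrite psumr_eq0 => [/allP hz|i _]; last by rewrite sqr_ge0.
rewrite le_eqVlt; apply/orP; left; apply/eqP; apply: eq_bigr => i _.
have := hz i (mem_index_enum i); rewrite /= sqrf_eq0 subr_eq0 => /eqP ->; done.
Qed.


Definition S1 s := \sum_i pos (q i - s).
Definition S2 s := \sum_i pos (q i - s) ^+ 2.
Definition F s := S2 s - t * S1 s ^+ 2.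
Definition kk r : R := #|[pred i | r <= q i]|%:R.
Definition ss r := \sum_(i | r <= q i) q i.
Definition QQ r := \sum_(i | r <= q i) q i ^+ 2.
Definition WW r := kk r * QQ r - ss r ^+ 2.
Definition cc r := t * kk r - 1.

Lemma S1_ge0 s : 0 <= S1 s.
Proof. by apply: sumr_ge0 => i _; apply: pos_ge0. Qed.

Lemma pieceE r s : s <= r -> (forall i, q i <= s \/ r <= q i) ->
  S1 s = ss r - kk r * s /\ kk r * F s = WW r - cc r * (ss r - kk r * s) ^+ 2.
Proof.
move=> sr hq.
have hp : forall i, pos (q i - s) = if r <= q i then q i - s else 0.
  move=> i; rewrite posE; case: (boolP (r <= q i)) => h.
    by rewrite ifT // subr_ge0 (le_trans sr h).
  case: (hq i) => [h'|h']; last by rewrite h' in h.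
  by rewrite subr_ge0; case: leP => // h2; apply/eqP; rewrite subr_eq0 eq_le h' h2.
have e1 : S1 s = ss r - kk r * s.
  rewrite /S1 (eq_bigr _ (fun i _ => hp i)) -big_mkcond /= sumrB sumr_const.
  by rewrite /kk mulr_natl.
have e2 : S2 s = QQ r - 2 * s * ss r + kk r * s ^+ 2.
  rewrite /S2 (eq_bigr (fun i => if r <= q i then (q i - s) ^+ 2 else 0)); last first.
    by move=> i _; rewrite hp; case: ifP => _ //; rewrite expr0n.
  rewrite -big_mkcond /=.
  rewrite (eq_bigr (fun i => q i ^+ 2 - (2 * s) * q i + s ^+ 2)); last by move=> i _; ring.
  by rewrite big_split sumrB /= -mulr_sumr sumr_const -(mulr_natl (s ^+ 2)) /kk /QQ /ss; ring.
split => //; rewrite /F e1 e2 /WW /cc; ring.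
Qed.

Hypothesis sqrtR : forall x : R, 0 <= x -> exists2 y, 0 <= y & y * y = x.

Lemma piece_root L r : L < r -> (forall i, q i <= L \/ r <= q i) ->
  F L <= 0 -> 0 < S1 L -> 0 < F r -> exists s, F s = 0 /\ 0 < S1 s.
Proof.
move=> Lr hq FL S1L Fr.
have [e1L e2L] := pieceE (ltW Lr) hq.
have [e1r e2r] : S1 r = ss r - kk r * r /\ kk r * F r = WW r - cc r * (ss r - kk r * r) ^+ 2.
  by apply: pieceE => // i; case/orP: (le_total (q i) r) => h; [left|right].
have k0 : 0 < kk r.
  rewrite /kk ltr0n lt0n; apply/negP => /eqP h.
  move: S1L; rewrite e1L /kk h mul0r subr0 /ss big_pred0 ?ltxx // => i.
  by have := card0_eq h i; rewrite !inE.
set k := kk r in e1L e2L e1r e2r k0 *; set W := WW r in e2L e2r *.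
set c := cc r in e2L e2r *; set sr := ss r in e1L e2L e1r e2r *.
set xL := sr - k * L in e1L e2L *; set xR := sr - k * r in e1r e2r *.
have xR0 : 0 <= xR by rewrite -e1r S1_ge0.
have hL : W - c * xL ^+ 2 <= 0.
  by rewrite -e2L; have := FL; nra.
have hR : 0 < W - c * xR ^+ 2.
  by rewrite -e2r; have := Fr; nra.
have xLR : xR < xL by rewrite /xR /xL; nra.
have hd : 0 < xL ^+ 2 - xR ^+ 2 by nra.
have c0 : 0 < c.
  have : 0 < (xL ^+ 2 - xR ^+ 2) * c by lra.
  by rewrite pmulr_rgt0.
have W0 : 0 <= W / c by rewrite divr_ge0 //; nra.
have [z z0 zz] := sqrtR W0.
have hyL : W / c <= xL ^+ 2 by rewrite ler_pdivrMr //; lra.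
have hyR : xR ^+ 2 < W / c by rewrite ltr_pdivlMr //; lra.
have zR : xR < z by nra.
have zL : z <= xL by nra.
have kn0 : k != 0 by rewrite gt_eqF.
set s := (sr - z) / k.
have hks : k * s = sr - z by rewrite /s; field.
have [e1s e2s] : S1 s = sr - k * s /\ k * F s = W - c * (sr - k * s) ^+ 2.
  apply: pieceE.
    by rewrite -(ler_pM2l k0) hks; rewrite /xR in zR; lra.
  move=> i; case: (hq i) => h; [left | by right].
  apply: (le_trans h); rewrite -(ler_pM2l k0) hks; rewrite /xL in zL; lra.
exists s; split; last by rewrite e1s hks; lra.
apply/eqP; rewrite -(mulIr_eq0 _ (mulIf kn0)) mulrC e2s hks.
rewrite (_ : sr - (sr - z) = z); last by ring.
have cn0 : c != 0 by rewrite gt_eqF.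
by rewrite expr2 zz mulrC divfK // subrr.
Qed.

Definition good j := (F (q j) <= 0) && (0 < S1 (q j)).

Lemma finish (iM : 'I_d) L : (forall j, q j <= q iM) ->
  t < (#|[pred i | q i == q iM]|%:R)^-1 ->
  F L <= 0 -> 0 < S1 L -> (forall j, good j -> q j <= L) ->
  exists s, F s = 0 /\ 0 < S1 s.
Proof.
move=> hM hm FL S1L hG.
have [i0 Li0] : exists i, L < q i.
  apply/existsP; apply/negP => /existsP hn; move: S1L; rewrite /S1 big1 ?ltxx // => i _.
  have : ~~ (L < q i) by apply/negP => h; apply: hn; exists i.
  by rewrite -leNgt posE subr_ge0 => h; case: leP => // h2; apply/eqP; rewrite subr_eq0 eq_le h h2.
have [jR LjR hjR] := @exmin _ (fun i => L < q i) q i0 Li0.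
set Rr := q jR.
have hq : forall i, q i <= L \/ Rr <= q i.
  by move=> i; case: (lerP (q i) L) => h; [left | right; apply: hjR].
apply: (piece_root LjR hq FL S1L).
rewrite ltNge; apply/negP => FR.
case: (ltrP 0 (S1 Rr)) => S1R.
  have : good jR by rewrite /good FR S1R.
  by move/hG; rewrite leNgt LjR.
have S1R0 : S1 Rr = 0 by apply/eqP; rewrite eq_le S1R S1_ge0.
have qR : forall i, q i <= Rr.
  move=> i; move/eqP: S1R0; rewrite psumr_eq0 => [/allP /(_ i (mem_index_enum i)) /= /eqP h|j _]; last exact: pos_ge0.
  by have := pos_ge (q i - Rr); rewrite h subr_le0.
have RM : Rr = q iM by apply/eqP; rewrite eq_le hM qR.
have hK : forall i, (Rr <= q i) = (q i == q iM).
  by move=> i; rewrite -RM eq_le qR.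
have kE : kk Rr = (#|[pred i | q i == q iM]|%:R).
  by rewrite /kk; congr (_%:R); apply: eq_card => i; rewrite !inE hK.
have k0 : 0 < kk Rr by rewrite kE ltr0n; apply/card_gt0P; exists iM; rewrite inE eqxx.
have sE : ss Rr = kk Rr * Rr.
  rewrite /ss (eq_bigr (fun _ => Rr)); last by move=> i hi; apply/eqP; rewrite eq_le qR hi.
  by rewrite sumr_const /kk mulr_natl.
have QE : QQ Rr = kk Rr * Rr ^+ 2.
  rewrite /QQ (eq_bigr (fun _ => Rr ^+ 2)); last first.
    by move=> i hi; congr (_ ^+ 2); apply/eqP; rewrite eq_le qR hi.
  by rewrite sumr_const /kk mulr_natl.
have W0 : WW Rr = 0 by rewrite /WW sE QE; ring.
have c0 : cc Rr < 0.
  by rewrite /cc subr_lt0 mulrC -ltr_pdivlMl // mulr1 kE.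
have [e1 e2] := pieceE (ltW LjR) hq.
rewrite W0 -e1 in e2.
have : 0 < kk Rr * F L by rewrite e2 expr2; have := mulr_gt0 S1L S1L; nra.
by rewrite pmulr_rgt0 // ltNge FL.
Qed.

Lemma exists_root (iM : 'I_d) : (0 < d)%N -> (forall j, q j <= q iM) ->
  d%:R^-1 < t -> t < (#|[pred i | q i == q iM]|%:R)^-1 ->
  exists s, F s = 0 /\ 0 < S1 s.
Proof.
move=> d0 hM td hm.
case: (pickP good) => [j0 gj0 | G0].
  have [jL gjL hjL] := @exmax _ good q j0 gj0.
  by case/andP: gjL => FL S1L; apply: (finish hM hm FL S1L).
have [jm _ hjm] := @exmin _ predT q iM isT.
set R0 := q jm.
have kE : kk R0 = d%:R.
  rewrite /kk; congr (_%:R); rewrite -[RHS]card_ord; apply: eq_card => i.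
  by rewrite !inE hjm.
have k0 : 0 < kk R0 by rewrite kE ltr0n.
have c0 : 0 < cc R0.
  by rewrite /cc subr_gt0 mulrC -ltr_pdivrMl // mulr1 kE.
set k := kk R0 in kE k0 *; set c := cc R0 in c0 *; set W := WW R0; set sr := ss R0.
set X := `|W| / c + 1 + `|sr - k * R0|.
have kn0 : k != 0 by rewrite gt_eqF.
have cn0 : c != 0 by rewrite gt_eqF.
set s0 := (sr - X) / k.
have hks : k * s0 = sr - X by rewrite /s0; field.
have Wc0 : 0 <= `|W| / c by rewrite divr_ge0 // ltW.
have X1 : 1 <= X by rewrite /X; have := normr_ge0 (sr - k * R0); lra.
have cX : `|W| <= c * X.
  have -> : c * X = `|W| + c + c * `|sr - k * R0| by rewrite /X; field.
  have := normr_ge0 (sr - k * R0); nra.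
have s0R : s0 <= R0.
  rewrite -(ler_pM2l k0) hks /X; have := ler_norm (sr - k * R0); lra.
have [e1 e2] : S1 s0 = sr - k * s0 /\ k * F s0 = W - c * (sr - k * s0) ^+ 2.
  by apply: pieceE => // i; right; apply: hjm.
rewrite hks (_ : sr - (sr - X) = X) in e1 e2; try ring.
apply: (@finish iM s0 hM hm); last by move=> j; rewrite G0.
  have : k * F s0 <= 0.
    have hcx : 0 <= c * X * (X - 1).
      by apply: mulr_ge0; [apply: mulr_ge0; [exact: ltW|lra] | lra].
    rewrite e2; have := ler_norm W; lra.
  by rewrite pmulr_rle0.
by rewrite e1; lra.
Qed.

Lemma exists_opt : (0 < d)%N -> d%:R^-1 <= t -> exists p, optimal p.
Proof.
move=> d0 ht.
have [iM _ hM'] := @exmax _ predT q (Ordinal d0) isT.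
have hM : forall j, q j <= q iM by move=> j; apply: hM'.
case: (eqVneq t d%:R^-1) => [tE | tn].
  by exists (fun _ => d%:R^-1); apply: cert_uniform.
have td : d%:R^-1 < t by rewrite lt_neqAle eq_sym tn ht.
case: (lerP (#|[pred i | q i == q iM]|%:R)^-1 t) => hm.
  by eexists; apply: (cert_argmax hM hm).
have [s [Fs S1s]] := exists_root d0 hM td hm.
set a := (S1 s)^-1; set b := s * a.
have a0 : 0 < a by rewrite invr_gt0.
have hp : forall i, pos (a * q i - b) = a * pos (q i - s).
  move=> i; rewrite /pos maxr_pMr ?ltW // mulr0 /b; congr (Num.max _ _); ring.
exists (fun i => pos (a * q i - b)); apply: cert_kkt => //.
  by rewrite (eq_bigr _ (fun i _ => hp i)) -mulr_sumr -/(S1 s) mulVf // gt_eqF.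
rewrite (eq_bigr (fun i => a ^+ 2 * pos (q i - s) ^+ 2)); last by move=> i _; rewrite hp exprMn.
rewrite -mulr_sumr -/(S2 s).
move/eqP: Fs; rewrite subr_eq0 => /eqP ->.
rewrite /a; field; rewrite gt_eqF //.
Qed.

End Gen.




Section TT.
Variable C : numClosedFieldType.
Lemma leRC (x y : RC C) : (x <= y) = (val x <= val y).
Proof. by []. Qed.
Lemma val_sum n (f : 'I_n -> RC C) : val (\sum_i f i) = \sum_i val (f i).
Proof. exact: rmorph_sum. Qed.
Lemma val_dot n (f g : 'I_n -> RC C) : val (\sum_i f i * g i) = \sum_i val (f i) * val (g i).
Proof. by rewrite rmorph_sum; apply: eq_bigr => i _; rewrite rmorphM. Qed.
Lemma val_inv n : val ((n%:R : RC C)^-1) = (n%:R : C)^-1.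
Proof. by rewrite fmorphV rmorph_nat. Qed.
Lemma sqrtRC (x : RC C) : 0 <= x -> exists2 y, 0 <= y & y * y = x.
Proof.
rewrite leRC /= => x0.
have hr : sqrtC (val x) \is Num.real by apply: ger0_real; rewrite sqrtC_ge0.
exists (Sub (sqrtC (val x)) hr); first by rewrite leRC /= sqrtC_ge0.
by apply: val_inj; rewrite rmorphM /= -expr2 sqrtCK.
Qed.

Variable d : nat.
Definition toR (p : 'rV[C]_d) : 'I_d -> RC C := fun i => insubd 0 (p 0 i).
Lemma val_toR p i : p \is a realmx -> val (toR p i) = p 0 i.
Proof. by move=> /mxOverP hp; rewrite /toR val_insubd hp. Qed.

Lemma part1 (q : 'rV[C]_d) t : (0 < d)%N -> q \is a realmx -> d%:R^-1 <= t ->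
  exists p, Pt_maximizer t q p.
Proof.
move=> d0 hq ht.
have tr : t \is Num.real by apply: ger0_real; apply: le_trans ht; rewrite invr_ge0 ler0n.
pose tR : RC C := insubd 0 t.
have vt : val tR = t by rewrite /tR val_insubd tr.
have htR : d%:R^-1 <= tR by rewrite leRC val_inv vt.
have [pR [[p0 [p1 p2]] popt]] := exists_opt (toR q) (@sqrtRC) d0 htR.
exists (\row_i val (pR i)).
have Ptp : Pt t (\row_i val (pR i)).
  split; first by apply/mxOverP => i j; rewrite mxE; exact: valP.
  split; first by move=> i; rewrite mxE; have := p0 i; rewrite leRC.
  split; first by rewrite (eq_bigr (fun i => val (pR i))) ?(fun i _ => mxE _ _ _) -?val_sum ?p1 ?rmorph1 // => i _; rewrite mxE.
  rewrite /dotv (eq_bigr (fun i => val (pR i) * val (pR i))); last by move=> i _; rewrite mxE.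
  by rewrite -val_dot -vt -leRC (eq_bigr (fun i => pR i ^+ 2)) // => i _; rewrite expr2.
split => // p' [hp' [p'0 [p'1 p'2]]].
have hf : feasible tR (toR p').
  split; first by move=> i; rewrite leRC val_toR.
  split; first by apply: val_inj; rewrite val_sum rmorph1 -p'1; apply: eq_bigr => i _; rewrite val_toR.
  rewrite leRC vt (eq_bigr (fun i => toR p' i * toR p' i)); last by move=> i _; rewrite expr2.
  by rewrite val_dot (eq_bigr (fun i => p' 0 i * p' 0 i)) // => i _; rewrite val_toR.
have := popt _ hf; rewrite leRC !val_dot /dotv.
rewrite (eq_bigr (fun i => p' 0 i * q 0 i)); last by move=> i _; rewrite !val_toR.
have := popt _ hf; rewrite leRC !val_dot.
have e1 : \sum_i val (toR p' i) * val (toR q i) = dotv p' q.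
  by rewrite /dotv; apply: eq_bigr => i _; rewrite !val_toR.
have e2 : \sum_i val (pR i) * val (toR q i) = dotv (\row_i val (pR i)) q.
  by apply: eq_bigr => i _; rewrite mxE val_toR.
by rewrite e1 e2.
Qed.
End TT.




Section Mx.
Variable C : numClosedFieldType.

Lemma tCmul m n k (A : 'M[C]_(m, n)) (B : 'M[C]_(n, k)) : (A *m B)^t* = B^t* *m A^t*.
Proof. by rewrite trmx_mul map_mxM. Qed.

Variable d : nat.
Implicit Types (U A B : 'M[C]_d).

Lemma UtU U : U \is unitarymx -> U^t* *m U = 1%:M.
Proof. by move=> hU; rewrite -invmx_unitary // mulVmx // unitarymx_unit. Qed.
Lemma UUt U : U \is unitarymx -> U *m U^t* = 1%:M.
Proof. by move/unitarymxP. Qed.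

Lemma tr_conj U A : U \is unitarymx -> \tr (U *m A *m U^t*) = \tr A.
Proof. by move=> hU; rewrite mxtrace_mulC mulmxA UtU // mul1mx. Qed.

Lemma conj_mul U A B : U \is unitarymx ->
  (U *m A *m U^t*) *m (U *m B *m U^t*) = U *m (A *m B) *m U^t*.
Proof.
move=> hU; rewrite -!mulmxA; congr (_ *m _).
by rewrite !mulmxA -[A *m _ *m U]mulmxA UtU // mulmx1.
Qed.

Lemma tr_diag2 (p q : 'rV[C]_d) : \tr (diag_mx p *m diag_mx q) = dotv p q.
Proof. by rewrite mul_diag_mx /mxtrace /dotv; apply: eq_bigr => i _; rewrite !mxE eqxx mulr1n. Qed.

Lemma rho_St U (p : 'rV[C]_d) t : U \is unitarymx -> Pt t p ->
  St t (U *m diag_mx p *m U^t*).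
Proof.
move=> hU [pr [p0 [p1 p2]]].
split; [split|split].
- rewrite /hermitian_mx !tCmul trmxCK -mulmxA.
  by rewrite tr_diag_mx map_diag_mx (realmxC pr).
- move=> v.
  rewrite -!mulmxA -tCmul !mulmxA.
  set w := v *m U.
  rewrite mul_mx_diag mxE; apply: sumr_ge0 => j _.
  rewrite !mxE mulrAC.
  by apply: mulr_ge0; [exact: mul_conjC_ge0 | exact: p0].
- by rewrite tr_conj // mxtrace_diag.
- by rewrite conj_mul // tr_conj // tr_diag2.
Qed.

Lemma St_Pt U (r : 'M[C]_d) t : U \is unitarymx -> St t r ->
  Pt t (\row_i (U^t* *m r *m U) i i).
Proof.
move=> hU [[rh rpsd] [r1 r2]].
set r' := U^t* *m r *m U.
have hdiag : forall i, r' i i = (row i (U^t*) *m r *m (row i (U^t*))^t*) 0 0.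
  move=> i; rewrite !mxE; apply: eq_bigr => k _; rewrite !mxE conjCK; congr (_ * _).
  by apply: eq_bigr => j _; rewrite !mxE.
have h0 : forall i, 0 <= r' i i by move=> i; rewrite hdiag.
have rh' : r'^t* = r' by rewrite /r' !tCmul trmxCK rh mulmxA.
have hent : forall i j, r' j i = (r' i j)^*.
  by move=> i j; rewrite -{1}rh' !mxE.
split; first by apply/mxOverP => i j; rewrite mxE; apply: ger0_real.
split; first by move=> i; rewrite mxE.
split.
  rewrite (eq_bigr (fun i => r' i i)); last by move=> i _; rewrite mxE.
  by rewrite -/(mxtrace r') /r' mxtrace_mulC mulmxA UUt // mul1mx.
apply: le_trans r2.
have -> : \tr (r *m r) = \tr (r' *m r').
  rewrite /r'; symmetry; rewrite !mulmxA -[U^t* *m r *m U *m U^t*]mulmxA UUt // mulmx1.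
  by rewrite mxtrace_mulC !mulmxA UUt // mul1mx.
rewrite /dotv [X in _ <= X]/mxtrace; apply: ler_sum => i _.
rewrite [X in _ <= X]mxE.
have -> : (\row_i r' i i) 0 i = r' i i by rewrite mxE.
rewrite [X in _ <= X](bigD1 i) //= lerDl; apply: sumr_ge0 => j _.
by rewrite (hent i j); apply: mul_conjC_ge0.
Qed.

Lemma tr_rH U (r : 'M[C]_d) (q : 'rV[C]_d) : U \is unitarymx ->
  \tr (r *m (U *m diag_mx q *m U^t*)) = dotv (\row_i (U^t* *m r *m U) i i) q.
Proof.
move=> hU.
rewrite mulmxA mxtrace_mulC !mulmxA mul_mx_diag /mxtrace /dotv.
by apply: eq_bigr => i _; rewrite !mxE.
Qed.
End Mx.

End Aux.
Import Aux.

Theorem mainTheorem3 (C : numClosedFieldType) (d : nat)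
    (H U : 'M[C]_d) (q : 'rV[C]_d) (t : C) :
  (0 < d)%N ->
  hermitian_mx H ->
  U \is unitarymx ->
  q \is a realmx ->
  H = U *m diag_mx q *m U ^t* ->
  d%:R^-1 <= t ->
  (exists p : 'rV[C]_d, Pt_maximizer t q p) /\
  (forall p : 'rV[C]_d, Pt_maximizer t q p ->
     St_maximizer t H (U *m diag_mx p *m U ^t*) /\
     \tr ((U *m diag_mx p *m U ^t*) *m H) = dotv p q).
Proof.
move=> d0 hH hU hq HE ht; split; first exact: part1.
move=> p [hp popt].
have hSt := rho_St hU hp.
have htr : \tr ((U *m diag_mx p *m U^t*) *m H) = dotv p q.
  by rewrite HE conj_mul // tr_conj // tr_diag2.
split => //; split => // r hr.
by rewrite htr HE tr_rH //; apply: popt; exact: St_Pt hU hr.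
Qed.
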